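(* Let $A$ be a unital $C^*$-algebra, $N\ge2$, and let $P\in M_{N-1}(A)$ be a submagic matrix. The following are equivalent: (1) $P$ can be completed to a magic matrix $\widetilde P\in M_N(A)$ (i.e. one whose upper-left $(N-1)\times(N-1)$ block is $P$); (2) the elements $P_{iN}=1-\sum_{j=1}^{N-1}P_{ij}$, $i=1,\ldots,N-1$, are pairwise orthogonal projections; (3) the elements $P_{Nj}=1-\sum_{i=1}^{N-1}P_{ij}$, $j=1,\ldots,N-1$, are pairwise orthogonal projections; (4) the element $P_{NN}=\sum_{i,j=1}^{N-1}P_{ij}-(N-2)1$ is a projection.
   Context: A submagic matrix over $A$ is a square matrix whose entries are orthogonal projections ($p=p^2=p^*$), pairwise orthogonal within each row and within each column. It is magic if in addition the entries in each row and in each column sum to $1$. *)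

(* Defs.v *)
From HB Require Import structures.
From mathcomp Require Import all_boot all_order all_algebra.
From mathcomp Require Import complex.
From mathcomp Require Import reals.
Set Implicit Arguments. Unset Strict Implicit. Unset Printing Implicit Defensive.
Import Order.TTheory GRing.Theory Num.Theory.
Local Open Scope ring_scope.
Local Open Scope complex_scope.

Definition is_unital_cstar_algebra (R : realType) (A : algType R[i])
    (star : A -> A) (nrm : A -> R) : Prop :=
      (forall x, 0 <= nrm x) /\
      (forall x, nrm x = 0 -> x = 0) /\
      (forall x y, nrm (x + y) <= nrm x + nrm y) /\
      (forall (c : R[i]) x, (nrm (c *: x))%:C = `|c| * (nrm x)%:C) /\
      (forall x y, nrm (x * y) <= nrm x * nrm y) /\
      (forall u : nat -> A,
         (forall e : R, 0 < e -> exists N, forall m n, (N <= m)%N -> (N <= n)%N ->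
             nrm (u m - u n) < e) ->
         exists l : A, forall e : R, 0 < e -> exists N, forall n, (N <= n)%N ->
             nrm (u n - l) < e) /\
      (forall x, star (star x) = x) /\
      (forall x y, star (x + y) = star x + star y) /\
      (forall (c : R[i]) x, star (c *: x) = c^* *: star x) /\
      (forall x y, star (x * y) = star y * star x) /\
      star 1 = 1 /\
      (forall x, nrm (star x * x) = nrm x ^+ 2).

Section Magic.
Variable A : nzRingType.
Variable star : A -> A.

Definition is_proj (p : A) : Prop := p * p = p /\ star p = p.

Definition submagic (n : nat) (P : 'M[A]_n) : Prop :=
  [/\ forall i j, is_proj (P i j),
      forall i j k, j != k -> P i j * P i k = 0
    & forall i k j, i != k -> P i j * P k j = 0].

Definition magic (n : nat) (P : 'M[A]_n) : Prop :=
  [/\ submagic P,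
      forall i, \sum_(j < n) P i j = 1
    & forall j, \sum_(i < n) P i j = 1].

Definition pairwise_orth_projs (n : nat) (f : 'I_n -> A) : Prop :=
  (forall i, is_proj (f i)) /\ (forall i k, i != k -> f i * f k = 0).
End Magic.

(* Main.v *)
Require Import Defs.
From HB Require Import structures.
From mathcomp Require Import all_boot all_order all_algebra.
From mathcomp Require Import cyclic separable cyclotomic.
From mathcomp Require Import complex reals lra zify.
Import Order.TTheory GRing.Theory Num.Theory.
Local Open Scope ring_scope.

Section Basics.
Context {R : realType} {A : algType R[i]} {star : A -> A} {nrm : A -> R}.
Implicit Types (x y : A).

Lemma hstarD (hA : is_unital_cstar_algebra star nrm) x y : star (x + y) = star x + star y.
Proof. case: hA => _ [_ [_ [_ [_ [_ [_ [h _]]]]]]]; exact: h. Qed.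
Lemma hstarM (hA : is_unital_cstar_algebra star nrm) x y : star (x * y) = star y * star x.
Proof. case: hA => _ [_ [_ [_ [_ [_ [_ [_ [_ [h _]]]]]]]]]; exact: h. Qed.
Lemma hstarZ (hA : is_unital_cstar_algebra star nrm) (c : R[i]) x : star (c *: x) = c^*%C *: star x.
Proof. case: hA => _ [_ [_ [_ [_ [_ [_ [_ [h _]]]]]]]]; exact: h. Qed.
Lemma hstar1 (hA : is_unital_cstar_algebra star nrm) : star 1 = 1.
Proof. case: hA => _ [_ [_ [_ [_ [_ [_ [_ [_ [_ [h _]]]]]]]]]]; exact: h. Qed.
Lemma hcstar (hA : is_unital_cstar_algebra star nrm) x : nrm (star x * x) = nrm x ^+ 2.
Proof. case: hA => _ [_ [_ [_ [_ [_ [_ [_ [_ [_ [_ h]]]]]]]]]]; exact: h. Qed.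
Lemma hnrm_ge0 (hA : is_unital_cstar_algebra star nrm) x : 0 <= nrm x.
Proof. case: hA => h _; exact: h. Qed.
Lemma hnrm_eq0 (hA : is_unital_cstar_algebra star nrm) x : nrm x = 0 -> x = 0.
Proof. case: hA => _ [h _]; exact: h. Qed.
Lemma hnrmD (hA : is_unital_cstar_algebra star nrm) x y : nrm (x + y) <= nrm x + nrm y.
Proof. case: hA => _ [_ [h _]]; exact: h. Qed.
Lemma hnrmZ (hA : is_unital_cstar_algebra star nrm) (c : R[i]) x : (nrm (c *: x))%:C%C = `|c| * (nrm x)%:C%C.
Proof. case: hA => _ [_ [_ [h _]]]; exact: h. Qed.
Lemma hnrmM (hA : is_unital_cstar_algebra star nrm) x y : nrm (x * y) <= nrm x * nrm y.
Proof. case: hA => _ [_ [_ [_ [h _]]]]; exact: h. Qed.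

Context (hA : is_unital_cstar_algebra star nrm).

Lemma star0 : star 0 = 0.
Proof.
have h := hstarD hA 0 0; rewrite addr0 in h.
by apply: (addrI (star 0)); rewrite addr0 -h.
Qed.

Lemma starN x : star (- x) = - star x.
Proof.
apply/eqP; rewrite -subr_eq0 opprK -hstarD // addNr; exact/eqP/star0.
Qed.

Lemma starB x y : star (x - y) = star x - star y.
Proof. by rewrite hstarD // starN. Qed.

Lemma star_sum (I : Type) (r : seq I) (P : pred I) (F : I -> A) :
  star (\sum_(i <- r | P i) F i) = \sum_(i <- r | P i) star (F i).
Proof.
elim/big_rec2: _ => [|i a b _ <-]; first exact: star0.
by rewrite hstarD.
Qed.

Lemma star_nat k : star (k%:R) = k%:R.
Proof.
elim: k => [|k IH]; first exact: star0.
by rewrite -addn1 !natrD hstarD // IH hstar1.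
Qed.

Lemma starK x : star (star x) = x.
Proof. case: hA => _ [_ [_ [_ [_ [_ [h _]]]]]]; exact: h. Qed.

Lemma nrm0 : nrm 0 = 0.
Proof.
have := hnrmZ hA 0 0; rewrite scale0r normr0 mul0r.
by case.
Qed.

Lemma nrmZr (r : R) x : 0 <= r -> nrm (r%:C%C *: x) = r * nrm x.
Proof.
move=> r0; have := hnrmZ hA (r%:C)%C x.
have -> : `|(r%:C)%C| = (r%:C)%C by apply/ger0_norm; rewrite ler0c.
by rewrite -rmorphM => /complexI.
Qed.

Lemma nrm_unit (c : R[i]) x : `|c| = 1 -> nrm (c *: x) = nrm x.
Proof. by move=> c1; have := hnrmZ hA c x; rewrite c1 mul1r => /complexI. Qed.

Lemma nrm1 : nrm 1 = 1.
Proof.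
have h := hcstar hA 1; rewrite hstar1 // mul1r expr2 in h.
have n0 : nrm 1 != 0.
  apply/eqP => /(hnrm_eq0 hA) /eqP; by rewrite oner_eq0.
by apply: (mulIf n0); rewrite mul1r -h.
Qed.

Lemma nrm_sa x : star x = x -> nrm (x * x) = nrm x ^+ 2.
Proof. by move=> sx; rewrite -hcstar // sx. Qed.

Lemma star_exp x k : star (x ^+ k) = star x ^+ k.
Proof.
elim: k => [|k IH]; first by rewrite !expr0 hstar1.
by rewrite exprS hstarM // IH -exprSr.
Qed.

Lemma nrm_sa_pow2 x k : star x = x -> nrm (x ^+ (2 ^ k)) = nrm x ^+ (2 ^ k).
Proof.
move=> sx; elim: k => [|k IH]; first by rewrite !expr1.
rewrite expnS mulnC !exprM -IH [in LHS]expr2 nrm_sa //; by rewrite star_exp sx.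
Qed.

Lemma nrm_exp_le x k : nrm (x ^+ k) <= nrm x ^+ k.
Proof.
elim: k => [|k IH]; first by rewrite !expr0 nrm1.
rewrite !exprS; apply: le_trans (hnrmM hA _ _) _.
by apply: ler_wpM2l; [exact: hnrm_ge0 | exact: IH].
Qed.

Lemma nrm_proj p : is_proj star p -> nrm p <= 1.
Proof.
case=> pp sp; have := @nrm_sa p sp; rewrite pp expr2 => h.
have [->|n0] := eqVneq (nrm p) 0; first exact: ler01.
suff -> : nrm p = 1 by [].
by apply: (mulIf n0); rewrite mul1r -h.
Qed.

Lemma nrm_sum (I : Type) (r : seq I) (P : pred I) (F : I -> A) :
  nrm (\sum_(i <- r | P i) F i) <= \sum_(i <- r | P i) nrm (F i).
Proof.
elim/big_rec2: _ => [|i a b _ IH]; first by rewrite nrm0.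
by apply: le_trans (hnrmD hA _ _) _; rewrite lerD2l.
Qed.

End Basics.

Lemma bernoulli_le (R : realType) (e : R) (m : nat) : 0 <= e -> 1 + m%:R * e <= (1 + e) ^+ m.
Proof.
move=> e0; elim: m => [|m IH]; first by rewrite mul0r addr0 expr0.
rewrite exprS -natr1.
have h1 : (1 + e) * (1 + m%:R * e) <= (1 + e) * (1 + e) ^+ m.
  by apply: ler_wpM2l => //; lra.
have h2 : 0 <= e * (m%:R * e) by apply: mulr_ge0 => //; apply: mulr_ge0.
rewrite mulrDl mul1r; move: h1 h2; move: (m%:R * e) ((1 + e) ^+ m) => t u.
nra.
Qed.

Lemma real_pow2_le (R : realType) (r : R) : 0 <= r ->
  (forall k, r ^+ (2 ^ k) <= 2) -> r <= 1.
Proof.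
move=> r0 h; rewrite leNgt; apply/negP => r1.
set e := r - 1.
have e0 : 0 < e by rewrite /e subr_gt0.
have bern : forall m : nat, 1 + m%:R * e <= r ^+ m.
  move=> m; have -> : r = 1 + e by rewrite /e addrC subrK.
  exact: bernoulli_le (ltW e0).
pose k := Num.bound (e^-1).
have hk : e^-1 < k%:R by apply: archi_boundP; rewrite invr_ge0 ltW.
have hk2 : (k < 2 ^ k)%N by apply: ltn_expl.
have : 1 < (2 ^ k)%:R * e.
  have : k%:R < (2 ^ k)%:R :> R by rewrite ltr_nat.
  move=> hh.
  have h3 : e^-1 * e < (2^k)%:R * e by rewrite ltr_pM2r //; exact: lt_trans hk hh.
  by rewrite mulVf ?lt0r_neq0 in h3.
have := bern (2 ^ k)%N; have := h k; lra.
Qed.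

Lemma real_small_eq0 (R : realType) (x : R) : 0 <= x ->
  (forall n : nat, (0 < n)%N -> n%:R * x <= 1) -> x = 0.
Proof.
move=> x0 h; apply/eqP; rewrite eq_le x0 andbT leNgt; apply/negP => xp.
pose k := Num.bound (x^-1).
have hk : x^-1 < k%:R by apply: archi_boundP; rewrite invr_ge0 ltW.
have kp : (0 < k)%N.
  rewrite lt0n; apply/negP => /eqP k0; move: hk; rewrite k0 ltNge invr_ge0 ltW //.
have h3 : x^-1 * x < k%:R * x by rewrite ltr_pM2r.
rewrite mulVf ?lt0r_neq0 // in h3.
by have := h k kp; lra.
Qed.

Section Cstar.
Context {R : realType} {A : algType R[i]} {star : A -> A} {nrm : A -> R}.
Context (hA : is_unital_cstar_algebra star nrm).
Implicit Types (x y : A).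

Lemma exprD_orth (a b : A) k : a * b = 0 -> b * a = 0 ->
  (a + b) ^+ k.+1 = a ^+ k.+1 + b ^+ k.+1.
Proof.
move=> ab ba; elim: k => [|k IH]; first by rewrite !expr1.
rewrite exprSr IH mulrDl !mulrDr.
have -> : a ^+ k.+1 * b = 0 by rewrite exprSr -mulrA ab mulr0.
have -> : b ^+ k.+1 * a = 0 by rewrite exprSr -mulrA ba mulr0.
by rewrite addr0 add0r -!exprSr.
Qed.

Lemma nrm_orth_le1 (a b : A) : star a = a -> star b = b -> a * b = 0 -> b * a = 0 ->
  nrm a <= 1 -> nrm b <= 1 -> nrm (a + b) <= 1.
Proof.
move=> sa sb ab ba na nb.
apply: real_pow2_le; first exact: (hnrm_ge0 hA (a + b)).
move=> k; rewrite -(nrm_sa_pow2 hA) //; last by rewrite (hstarD hA) sa sb.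
have : (0 < 2 ^ k)%N by rewrite expn_gt0.
case: (2 ^ k)%N => // m _.
rewrite exprD_orth //; apply: le_trans (hnrmD hA _ _) _.
have h1 := nrm_exp_le hA a m.+1; have h2 := nrm_exp_le hA b m.+1.
have h3 : nrm a ^+ m.+1 <= 1 by apply: exprn_ile1 => //; exact: (hnrm_ge0 hA _).
have h4 : nrm b ^+ m.+1 <= 1 by apply: exprn_ile1 => //; exact: (hnrm_ge0 hA _).
lra.
Qed.

End Cstar.

Section Ext.
Context {R : realType} {A : algType R[i]} {star : A -> A} {nrm : A -> R}.
Context (hA : is_unital_cstar_algebra star nrm).
Implicit Types (x y : A).

Lemma mul_lin (x : A) (a b : R[i]) :
  (1 + a *: x) * (1 + b *: x) = 1 + (a + b) *: x + (a * b) *: (x * x).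
Proof.
rewrite mulrDr !mulrDl !mul1r mulr1 -scalerAl -scalerAr scalerA scalerDl.
by rewrite !addrA [a * b]mulrC.
Qed.

Lemma collect3 (x y : A) (p q u v w t : R[i]) :
  p *: (1 + q *: x + u *: y) + v *: (1 + w *: x + t *: y) =
  (p + v) *: 1 + (p * q + v * w) *: x + (p * u + v * t) *: y.
Proof.
rewrite !scalerDr !scalerA !scalerDl.
by rewrite addrACA; congr (_ + _); rewrite addrACA.
Qed.

Lemma ext_circle x : star x = x -> nrm (1 + x) <= 1 -> nrm (1 - x) <= 1 ->
  forall w : R[i], w * w^*%C = 1 -> nrm (1 + w *: x) <= 1.
Proof.
move=> sx n1 n2 w ww.
have nw : `|w| = 1.
  apply/eqP; rewrite -(pexpr_eq1 (n:=2)) // sqr_normc ww //.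
set c := complex.Re w.
have hc : w^*%C + w = (2 * c)%:C%C.
  by rewrite addrC addcJ rmorphM rmorph_nat.
have hc1 : `|c| <= 1.
  have := normc_ge_Re w; rewrite nw -(rmorph1 (real_complex R)) lecR //.
have hr : 0 <= (1 + c) / 2 by move: hc1; rewrite ler_norml; lra.
have hs : 0 <= (1 - c) / 2 by move: hc1; rewrite ler_norml; lra.
have s1 : star (1 + x) = 1 + x by rewrite (hstarD hA) (hstar1 hA) sx.
have s2 : star (1 - x) = 1 - x by rewrite (starB hA) (hstar1 hA) sx.
have key : star (1 + w *: x) * (1 + w *: x) =
   ((1 + c) / 2)%:C%C *: ((1 + x) * (1 + x)) + ((1 - c) / 2)%:C%C *: ((1 - x) * (1 - x)).
  rewrite (hstarD hA) (hstar1 hA) (hstarZ hA) sx mul_lin.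
  have -> : 1 + x = 1 + 1 *: x by rewrite scale1r.
  have -> : 1 - x = 1 + (-1) *: x by rewrite scaleN1r.
  rewrite !mul_lin collect3 hc [w^*%C * w]mulrC ww.
  rewrite -[X in X + _ + _ = _](scale1r (1 : A)).
  congr (_ *: _ + _ *: _ + _ *: _); apply/eqP; rewrite eq_complex /=; apply/andP; split;
    apply/eqP; try lra; simpc; lra.
have : nrm (1 + w *: x) ^+ 2 <= 1.
  rewrite -(hcstar hA) key; apply: le_trans (hnrmD hA _ _) _.
  rewrite !(nrmZr hA) // !(nrm_sa hA) //.
  have a1 : nrm (1 + x) ^+ 2 <= 1 by apply: exprn_ile1 => //; exact: (hnrm_ge0 hA _).
  have a2 : nrm (1 - x) ^+ 2 <= 1 by apply: exprn_ile1 => //; exact: (hnrm_ge0 hA _).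
  nra.
have := hnrm_ge0 hA (1 + w *: x); nra.
Qed.

End Ext.

Lemma prim_root_exists_C (R : realType) n : (n > 0)%N -> exists z : R[i], n.-primitive_root z.
Proof.
pose p : {poly R[i]} := 'X^n - 1; have [r Dp] := closed_field_poly_normal p.
move=> n_gt0; rewrite (monicP _) ?monicXnsubC // scale1r in Dp.
have rn1: all n.-unity_root r by apply/allP=> z; rewrite -root_prod_XsubC -Dp.
have sz_r: (n < (size r).+1)%N.
  by rewrite -(size_prod_XsubC r id) -Dp size_XnsubC.
have [|z] := hasP (has_prim_root n_gt0 rn1 _ sz_r); last by exists z.
by rewrite -separable_prod_XsubC -Dp separable_Xn_sub_1 // pnatr_eq0 -lt0n.
Qed.

Lemma root_sum (F : fieldType) (m : nat) (z : F) (e : nat) : m.-primitive_root z ->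
  \sum_(k < m) (z ^+ e) ^+ k = if (m %| e)%N then m%:R else 0.
Proof.
move=> pz; rewrite (prim_order_dvd pz e).
case: eqP => [->|ne].
  by under eq_bigr do rewrite expr1n; rewrite sumr_const card_ord.
have := subrX1 (z ^+ e) m.
rewrite -exprM mulnC exprM (prim_expr_order pz) expr1n subrr => /esym /eqP.
by rewrite mulf_eq0 subr_eq0 => /orP [/eqP|/eqP].
Qed.

Lemma not_dvd_aux (n j : nat) : (0 < n)%N -> (j < n.+1)%N -> j <> 1%N -> ~~ (n.+1 %| n + j)%N.
Proof.
move=> n0 jn j1; apply/negP => /dvdnP [q hq].
move: hq; case: q => [|[|q]] hq; try lia.
Qed.

Section Ext2.
Context {R : realType} {A : algType R[i]} {star : A -> A} {nrm : A -> R}.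
Context (hA : is_unital_cstar_algebra star nrm).

Lemma ext_zero (x : A) : star x = x -> nrm (1 + x) <= 1 -> nrm (1 - x) <= 1 -> x = 0.
Proof.
move=> sx n1 n2; apply: (hnrm_eq0 hA); apply: real_small_eq0; first exact: (hnrm_ge0 hA _).
move=> n n0.
have [z pz] := @prim_root_exists_C R n.+1 (ltn0Sn n).
have nz : `|z| = 1.
  apply/eqP; rewrite -(pexpr_eq1 (n:=n.+1)) // -normrX (prim_expr_order pz) normr1 //.
have nzk : forall k, `|z ^+ k| = 1 by move=> k; rewrite normrX nz expr1n.
have circ : forall k, nrm (z ^+ k *: x + 1) <= 1.
  move=> k; rewrite addrC; apply: (ext_circle hA) => //.
  by rewrite -sqr_normc nzk expr1n.
pose S := \sum_(k < n.+1) (z ^+ k) ^+ n *: (z ^+ k *: x + 1) ^+ n.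
have bound : nrm S <= n.+1%:R.
  apply: le_trans (nrm_sum hA _ _ _ _) _.
  rewrite -[n.+1 in X in _ <= X]card_ord -sumr_const.
  apply: ler_sum => k _.
  rewrite (nrm_unit hA); last by rewrite normrX nzk expr1n.
  apply: le_trans (nrm_exp_le hA _ _) _.
  by apply: exprn_ile1 => //; exact: (hnrm_ge0 hA _).
have value : S = n.+1%:R *: (x *+ n).
  rewrite /S.
  under eq_bigr => k _ do rewrite exprD1n scaler_sumr.
  rewrite exchange_big /=.
  under eq_bigr => j _ do under eq_bigr => k _ do
    rewrite exprZn scalerMnr scalerA -exprD -exprM mulnC exprM.
  under eq_bigr => j _ do rewrite -scaler_suml (@root_sum _ _ _ _ pz).
  rewrite (bigD1 (Ordinal (n0 : (1 < n.+1)%N))) //= big1 ?addr0; last first.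
    move=> j /eqP jn; rewrite ifF ?scale0r //; apply/negbTE/not_dvd_aux => // j1.
    by apply: jn; apply: val_inj.
  by rewrite addn1 dvdnn expr1 bin1.
move: bound; rewrite value -[x *+ n]scaler_nat scalerA -(rmorph_nat (real_complex R)).
rewrite -(rmorph_nat (real_complex R)) -rmorphM (nrmZr hA) ?ler0n //.
rewrite -mulrA => h.
have hp : (0 : R) < n.+1%:R by rewrite ltr0n.
by rewrite -(ler_pM2l hp) mulr1.
by rewrite mulr_ge0 ?ler0n.
Qed.
End Ext2.

Section Core.
Context {R : realType} {A : algType R[i]} {star : A -> A} {nrm : A -> R}.
Context (hA : is_unital_cstar_algebra star nrm).

Lemma proj_compl (p : A) : is_proj star p -> is_proj star (1 - p).
Proof.
case=> pp sp; split; last by rewrite (starB hA) (hstar1 hA) sp.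
by rewrite mulrBl mul1r mulrBr mulr1 pp subrr subr0.
Qed.

Lemma nat_scal (k : nat) : (k%:R : A) = ((k%:R : R)%:C)%C *: 1.
Proof. by rewrite (rmorph_nat (real_complex R)) scaler_nat. Qed.

Lemma core_sum (I : finType) (t : A) (p : I -> A) :
  is_proj star t -> (forall l, is_proj star (p l)) ->
  \sum_l t * p l * t = 0 -> forall l, p l * t = 0.
Proof.
move=> [tt st] hp hs k.
pose y l := t * p l * t.
have sy : forall l, star (y l) = y l.
  by move=> l; rewrite /y !(hstarM hA) st (hp l).2 mulrA.
have ny : forall l, nrm (1 - y l) <= 1.
  move=> l; have -> : 1 - y l = (1 - t) + t * (1 - p l) * t.
    by rewrite /y mulrBr mulr1 mulrBl tt addrA subrK.
  have [pp sp] := hp l.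
  apply: (nrm_orth_le1 hA).
  - by rewrite (starB hA) (hstar1 hA) st.
  - by rewrite !(hstarM hA) st (starB hA) (hstar1 hA) sp mulrA.
  - by rewrite !mulrA mulrBl mul1r tt subrr !mul0r.
  - by rewrite -!mulrA mulrBr mulr1 tt subrr !mulr0.
  - apply: (nrm_proj hA); apply: proj_compl; exact: (conj tt st).
  - apply: le_trans (hnrmM hA _ _) _.
    have h1 := nrm_proj hA _ (conj tt st).
    have h2 := nrm_proj hA _ (proj_compl _ (hp l)).
    have h3 := hnrmM hA t (1 - p l).
    have g1 := hnrm_ge0 hA t; have g2 := hnrm_ge0 hA (1 - p l).
    have g3 := hnrm_ge0 hA (t * (1 - p l)).
    nra.
set c := #|I|.
have c0 : (0 < c)%N by apply/card_gt0P; exists k.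
pose e : R := (c%:R)^-1.
have e0 : 0 < e by rewrite invr_gt0 ltr0n.
have e1 : e <= 1 by rewrite invf_le1 ?ler1n ?ltr0n.
have ec : e * c%:R = 1 by rewrite mulVf // pnatr_eq0 -lt0n.
pose u := (e%:C)%C *: y k.
have su : star u = u by rewrite (hstarZ hA) conjc_real sy.
have nu1 : nrm (1 - u) <= 1.
  have -> : 1 - u = ((1 - e)%:C)%C *: 1 + (e%:C)%C *: (1 - y k).
    by rewrite scalerBr (rmorphB (real_complex R)) rmorph1 scalerBl scale1r addrA subrK.
  apply: le_trans (hnrmD hA _ _) _.
  rewrite !(nrmZr hA) ?subr_ge0 ?(ltW e0) // (nrm1 hA) mulr1.
  have := ny k; have := hnrm_ge0 hA (1 - y k); nra.
have nu2 : nrm (1 + u) <= 1.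
  have hsum : \sum_l (1 - y l) = c%:R.
    by rewrite sumrB hs subr0 sumr_const.
  rewrite (bigD1 k) //= in hsum.
  have -> : 1 + u = (e%:C)%C *: (1 + \sum_(l | l != k) (1 - y l)).
    have -> : \sum_(l | l != k) (1 - y l) = c%:R - (1 - y k) by rewrite -hsum [1 - y k + _]addrC addrK.
    rewrite opprB addrCA [1 + (_ + _)]addrCA subrr addr0 scalerDr nat_scal scalerA -(rmorphM (real_complex R)).
    by rewrite ec scale1r.
  rewrite (nrmZr hA) ?(ltW e0) //.
  have hb : nrm (1 + \sum_(l | l != k) (1 - y l)) <= c%:R.
    apply: le_trans (hnrmD hA _ _) _.
    have : \sum_(l : I) (1 : R) = c%:R by rewrite sumr_const.
    rewrite (bigD1 k) //= (nrm1 hA) => <-; rewrite lerD2l.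
    apply: le_trans (nrm_sum hA _ _ _ _) _.
    by apply: ler_sum => l _; exact: ny.
  have := ler_wpM2l (ltW e0) hb; rewrite ec //.
have u0 := ext_zero hA _ su nu2 nu1.
have yk0 : y k = 0.
  have ne : (e%:C)%C != 0.
    apply/eqP => /(congr1 (@complex.Re R)) /= h; by move: e0; rewrite h ltxx.
  by move: u0; rewrite /u => /eqP; rewrite scaler_eq0 (negbTE ne) /= => /eqP.
apply: (hnrm_eq0 hA).
have := hcstar hA (p k * t).
rewrite (hstarM hA) st (hp k).2 mulrA -[t * p k * p k]mulrA (hp k).1.
rewrite -/(y k) yk0 (nrm0 hA) => /esym /eqP; rewrite sqrf_eq0 => /eqP //.
Qed.
End Core.

Section Part.
Context {R : realType} {A : algType R[i]} {star : A -> A} {nrm : A -> R}.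
Context (hA : is_unital_cstar_algebra star nrm).

Lemma proj0 : is_proj star (0 : A).
Proof. by split; [rewrite mul0r | exact: (star0 hA)]. Qed.

Lemma partition_orth (I : finType) (e : I -> A) :
  (forall i, is_proj star (e i)) -> \sum_i e i = 1 ->
  forall i k, i != k -> e i * e k = 0.
Proof.
move=> he hs i k ik.
pose p l := if l == k then 0 else e l.
have hp : forall l, is_proj star (p l).
  by move=> l; rewrite /p; case: eqP => _; [exact: proj0 | exact: he].
have hsum : \sum_l e k * p l * e k = 0.
  rewrite (bigD1 k) //= /p eqxx mulr0 mul0r add0r.
  have : \sum_l e k * e l * e k = e k.
    by rewrite -mulr_suml -mulr_sumr hs mulr1 (he k).1.
  rewrite (bigD1 k) //= !(he k).1 => h.
  have h2 : \sum_(l | l != k) e k * e l * e k = 0 by apply: (addrI (e k)); rewrite h addr0.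
  rewrite -[RHS]h2.
  by apply: eq_bigr => l /negbTE ->.
have := core_sum hA _ _ _ (he k) hp hsum i.
by rewrite /p (negbTE ik).
Qed.
End Part.

Section Main.
Context {R : realType} {A : algType R[i]} {star : A -> A} {nrm : A -> R}.
Context (hA : is_unital_cstar_algebra star nrm).

Lemma sum_orth_proj (I : finType) (f : I -> A) :
  (forall i, is_proj star (f i)) -> (forall i k, i != k -> f i * f k = 0) ->
  is_proj star (\sum_i f i).
Proof.
move=> hp ho; split; last by rewrite (star_sum hA); apply: eq_bigr => i _; exact: (hp i).2.
rewrite mulr_suml; apply: eq_bigr => i _.
rewrite mulr_sumr (bigD1 i) //= (hp i).1 big1 ?addr0 // => k ki.
by apply: ho; rewrite eq_sym.
Qed.

Lemma magic_of (m : nat) (Q : 'M[A]_m) :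
  (forall i j, is_proj star (Q i j)) ->
  (forall i, \sum_j Q i j = 1) -> (forall j, \sum_i Q i j = 1) -> magic star Q.
Proof.
move=> hp hr hc; split => //; split => //.
- move=> i j k jk; exact: (partition_orth hA _ (fun j => Q i j) (fun j => hp i j) (hr i)).
- move=> i k j ik; exact: (partition_orth hA _ (fun i => Q i j) (fun i => hp i j) (hc j)).
Qed.

Lemma widen_lift (n : nat) (i : 'I_n) (H : (n <= n.+1)%N) : widen_ord H i = lift ord_max i.
Proof. by apply: val_inj; rewrite [RHS]lift_max. Qed.

Lemma unlift_widen (n : nat) (i : 'I_n) (H : (n <= n.+1)%N) : unlift ord_max (widen_ord H i) = Some i.
Proof. by rewrite widen_lift liftK. Qed.

End Main.

Lemma sub_nat_aux (B : nzRingType) (X : B) (k : nat) : X - k%:R = 1 - (k.+1%:R - X).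
Proof. by rewrite -natr1 opprB opprD addrCA [1 + (_ + _)]addrCA subrr addr0. Qed.

Lemma sum_eq1 (B : nzRingType) (S q : B) : S + q = 1 -> q = 1 - S.
Proof. by move=> h; rewrite -h [S + q]addrC addrK. Qed.

Theorem proposition3p2 (R : realType) (A : algType R[i]) (star : A -> A) (nrm : A -> R)
  (hA : is_unital_cstar_algebra star nrm)
  (N : nat) (hN : (2 <= N)%N) (P : 'M[A]_(N.-1)) (hP : submagic star P) :
  let completable :=
    exists Q : 'M[A]_N, magic star Q /\
      forall i j : 'I_(N.-1),
        Q (widen_ord (leq_pred N) i) (widen_ord (leq_pred N) j) = P i j in
  let cond2 := pairwise_orth_projs star (fun i : 'I_(N.-1) => 1 - \sum_(j < N.-1) P i j) in
  let cond3 := pairwise_orth_projs star (fun j : 'I_(N.-1) => 1 - \sum_(i < N.-1) P i j) in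
  let cond4 := is_proj star (\sum_(i < N.-1) \sum_(j < N.-1) P i j - (N - 2)%:R) in
  (completable <-> cond2) /\ (completable <-> cond3) /\ (completable <-> cond4).
Proof.
case: N hN P hP => [|[|n]] // hN P hP.
move=> comp c2 c3 c4.
pose a i := 1 - \sum_(j < n.+1) P i j.
pose b j := 1 - \sum_(i < n.+1) P i j.
pose d : A := 1 - \sum_i a i.
have [hPp hPr hPc] := hP.
have pa : forall i, is_proj star (a i).
  move=> i; apply: (proj_compl hA); apply: (sum_orth_proj hA) => // j k; exact: hPr.
have pb : forall j, is_proj star (b j).
  move=> j; apply: (proj_compl hA); apply: (sum_orth_proj hA _ (fun i => P i j)) => // i k; exact: hPc.
have ab : \sum_i a i = \sum_j b j.
  by rewrite /a /b !sumrB exchange_big.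
have d4 : \sum_(i < n.+1) \sum_(j < n.+1) P i j - (n.+2 - 2)%:R = d.
  rewrite /d /a sumrB sumr_const card_ord.
  have -> : (n.+2 - 2 = n)%N by lia.
  exact: sub_nat_aux.
have K2 : c2 -> c4.
  rewrite /c2 /c4 d4 => -[h1 h2]; apply: (proj_compl hA); exact: (sum_orth_proj hA).
have K3 : c3 -> c4.
  rewrite /c3 /c4 d4 => -[h1 h2]; apply: (proj_compl hA); rewrite ab; exact: (sum_orth_proj hA).
have K4 : c4 -> comp.
  rewrite /c4 d4 => pd.
  pose Q : 'M[A]_(n.+2) := \matrix_(i, j)
    match unlift ord_max i, unlift ord_max j with
    | Some i', Some j' => P i' j'
    | Some i', None => a i'
    | None, Some j' => b j'
    | None, None => d
    end.
  exists Q; split; last by move=> i j; rewrite mxE !unlift_widen.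
  apply: (magic_of hA).
  - move=> i j; rewrite mxE.
    by case: unliftP => [i' _|_]; case: unliftP => [j' _|_].
  - move=> i; rewrite big_ord_recr /=.
    under eq_bigr do rewrite mxE unlift_widen.
    rewrite mxE unlift_none.
    case: unliftP => [i' _|_] /=; first by rewrite /a addrC subrK.
    by rewrite /d ab addrC subrK.
  - move=> j; rewrite big_ord_recr /=.
    under eq_bigr do rewrite mxE unlift_widen.
    rewrite mxE unlift_none.
    case: unliftP => [j' _|_] /=; first by rewrite /b addrC subrK.
    by rewrite /d addrC subrK.
have K1 : comp -> [/\ c2, c3 & c4].
  case=> Q [[[hQp hQr hQc] hrow hcol] hQP].
  have hQP' : forall i j, Q (lift ord_max i) (lift ord_max j) = P i j.
    by move=> i j; rewrite -!(widen_lift _ _ (leq_pred n.+2)) hQP.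
  have ea : forall i, Q (lift ord_max i) ord_max = a i.
    move=> i; apply: sum_eq1; have := hrow (lift ord_max i); rewrite big_ord_recr /=.
    by under eq_bigr do rewrite widen_lift hQP'.
  have eb : forall j, Q ord_max (lift ord_max j) = b j.
    move=> j; apply: sum_eq1; have := hcol (lift ord_max j); rewrite big_ord_recr /=.
    by under eq_bigr do rewrite widen_lift hQP'.
  have ed : Q ord_max ord_max = d.
    apply: sum_eq1; have := hcol ord_max; rewrite big_ord_recr /=.
    by under eq_bigr do rewrite widen_lift ea.
  split.
  - split; first by move=> i; rewrite -/(a i) -ea.
    move=> i k ik; rewrite -/(a i) -/(a k) -!ea; apply: hQc.
    by apply: contra ik => /eqP /lift_inj ->.
  - split; first by move=> j; rewrite -/(b j) -eb.
    move=> j k jk; rewrite -/(b j) -/(b k) -!eb; apply: hQr.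
    by apply: contra jk => /eqP /lift_inj ->.
  - by rewrite /c4 d4 -ed.
split; [|split]; split.
- by case/K1.
- by move/K2/K4.
- by case/K1.
- by move/K3/K4.
- by case/K1.
- exact: K4.
Qed.
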